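(* Let $\tilde S\subseteq\mathfrak P$ and $a,b\in\mathcal C_{\mathfrak P}(\tilde S)$ with $\omega_{\tilde S}(a)<\omega_{\tilde S}(b)$. Then $\omega_{\tilde S}(a\cdot b)=\omega_{\tilde S}(a)$.
   Context: $\mathfrak P$ is the group of $N$-qubit Pauli operators modulo phases; $\mathcal C_{\mathfrak P}(\tilde S)$ is the centralizer of $\tilde S$ in $\mathfrak P$. The weight of a Pauli operator is its number of non-identity tensor factors. For $l\in\mathcal C_{\mathfrak P}(\tilde S)$, $\omega_{\tilde S}(l)$ is the minimum weight of an operator $e\in\mathcal C_{\mathfrak P}(\tilde S)$ that anticommutes with $l$, with value $+\infty$ if no such $e$ exists. *)

(* Defs.v *)
From mathcomp Require Import all_boot all_order.
Set Implicit Arguments. Unset Strict Implicit. Unset Printing Implicit Defensive.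

(* A single-qubit Pauli operator modulo phase is encoded by its (x, z) bits:
   (false,false) = I, (true,false) = X, (false,true) = Z, (true,true) = Y. *)
Definition pauli (N : nat) := {ffun 'I_N -> bool * bool}.

Definition pmul N (p q : pauli N) : pauli N :=
  [ffun i => (xorb (p i).1 (q i).1, xorb (p i).2 (q i).2)].

Definition weight N (p : pauli N) : nat := #|[set i | p i != (false, false)]|.

Definition anticomm1 (u v : bool * bool) : bool := xorb (u.1 && v.2) (u.2 && v.1).

Definition anticomm N (p q : pauli N) : bool :=
  odd #|[set i | anticomm1 (p i) (q i)]|.

Definition centralizer N (S : {set pauli N}) : {set pauli N} :=
  [set p | [forall s in S, ~~ anticomm p s]].

(* omega_S(l): minimum weight of e in the centralizer of S anticommuting with l;
   None encodes +infinity. *)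
Definition omega N (S : {set pauli N}) (l : pauli N) : option nat :=
  if [pick e | (e \in centralizer S) && anticomm e l] is Some e0 then
    Some (weight [arg min_(e < e0 | (e \in centralizer S) && anticomm e l) weight e])
  else None.

Definition olt (m n : option nat) : bool :=
  match m, n with
  | Some a, Some b => a < b
  | Some _, None => true
  | None, _ => false
  end.

(* Main.v *)
Require Import Defs.
From mathcomp Require Import all_boot all_order.

Lemma odd_card (T : finType) (f : T -> bool) :
  odd #|[set i | f i]| = \big[addb/false]_i f i.
Proof.
rewrite -sum1dep_card big_mkcond /=.
rewrite (big_morph odd oddD (erefl : odd 0 = false)).
by apply: eq_bigr => i _; case: (f i).
Qed.

Lemma anticommM N (e a b : pauli N) :
  anticomm e (pmul a b) = addb (anticomm e a) (anticomm e b).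
Proof.
rewrite /anticomm !odd_card -big_split /=.
apply: eq_bigr => i _; rewrite /pmul ffunE /anticomm1 /=.
by case: (e i) (a i) (b i) => [[] []] [[] []] [[] []].
Qed.

Section Om.
Variables (N : nat) (S : {set pauli N}) (l : pauli N).
Let P e := (e \in centralizer S) && anticomm e l.

Lemma omega_some w : omega S l = Some w ->
  (exists e, P e /\ weight e = w) /\ (forall e, P e -> w <= weight e).
Proof.
rewrite /omega; case: pickP => [e0 He0|] //= [<-].
case: arg_minnP => // e He Hmin; split; first by exists e.
exact: Hmin.
Qed.

Lemma omega_none : omega S l = None -> forall e, ~~ P e.
Proof.
rewrite /omega; case: pickP => [e0 He0|H] //= _ e; exact: negbT (H e).
Qed.

Lemma omega_char e0 : P e0 -> (forall e, P e -> weight e0 <= weight e) ->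
  omega S l = Some (weight e0).
Proof.
move=> He0 Hm; rewrite /omega; case: pickP => [e1 He1|H]; last by move: He0; rewrite /P H.
congr Some; case: arg_minnP => // e He Hmin.
by apply/eqP; rewrite eqn_leq Hmin // Hm.
Qed.
End Om.

Theorem lemma3 (N : nat) (S : {set pauli N}) (a b : pauli N) :
  a \in centralizer S -> b \in centralizer S ->
  olt (omega S a) (omega S b) ->
  omega S (pmul a b) = omega S a.
Proof.
move=> _ _.
case Ha: (omega S a) => [wa|] //.
have [[ea [/andP [Cea Aea] Wea]] Hma] := @omega_some _ _ _ _ Ha.
move=> Hlt.
have Hb : forall e, (e \in centralizer S) && anticomm e b -> wa < weight e.
  move=> e He; move: Hlt; case Hb: (omega S b) => [wb|] //=.
    move=> Hlt; have [_ Hmb] := @omega_some _ _ _ _ Hb.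
    by apply: leq_trans Hlt (Hmb _ He).
  by move=> _; have := @omega_none _ _ _ Hb e; rewrite /= He.
have Beab : anticomm ea b = false.
  apply/negbTE/negP => Ab.
  by have := Hb ea; rewrite Cea Ab Wea ltnn => /(_ isT).
rewrite -Wea; apply: omega_char.
  by rewrite Cea anticommM Aea Beab.
move=> e /andP [Ce]; rewrite anticommM Wea.
case Ae: (anticomm e a) => /=.
  by move=> _; apply: Hma; rewrite Ce Ae.
by move=> Be; apply: ltnW; apply: Hb; rewrite Ce Be.
Qed.
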